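(* Let $G$ be a $2$-dc-semigroup. \begin{enumerate} \item The set $U_2=\{I_2(i,k): i\in\mathbf{N},\ k\in\mathbf{N}^*\}$, endowed with the operation \[ I_2(i,k)\cdot I_2(j,l)=\begin{cases} I_2(j,l) & \text{if } i=0 \text{ and } k=1,\\ I_2(i,k) & \text{if } j=0 \text{ and } l=1,\\ I_2(i+j,k+l) & \text{otherwise},\end{cases} \] is an abelian semigroup. \item If $i,j\in\mathbf{N}$, $k,l\in\mathbf{N}^*$, $I_2(i,k)\subseteq G$ and $I_2(j,l)\subseteq G$, then $I_2(i,k)\cdot I_2(j,l)\subseteq G$, where the product is the operation defined in (1). \end{enumerate}
   Context: $\mathbf{N}=\{0,1,2,\dots\}$ and $\mathbf{N}^*=\mathbf{N}\setminus\{0\}$. A $2$-dc-semigroup is a subsemigroup $G$ of the multiplicative semigroup $(\mathbf{N}^*,\cdot)$ which is closed with respect to the number of binary digits: if $x\in G$ and $2^{n-1}\le x<2^n$ then $\{y\in\mathbf{N}: 2^{n-1}\le y<2^n\}\subseteq G$. For $i\in\mathbf{N}$ and $j\in\mathbf{N}^*$, $I_2(i,j)=\{x\in\mathbf{N}: 2^i\le x<2^{i+j}\}$. *)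

(* Defs.v *)
From mathcomp Require Import all_boot.
Set Implicit Arguments. Unset Strict Implicit. Unset Printing Implicit Defensive.

Definition I2 (i j : nat) : nat -> Prop := fun x => 2 ^ i <= x < 2 ^ (i + j).

Definition nsubset (A B : nat -> Prop) : Prop := forall x, A x -> B x.

(* G is a 2-dc-semigroup: a subsemigroup of (N-star, multiplication) closed w.r.t. the
   number of binary digits. *)
Definition is_2dc_semigroup (G : nat -> Prop) : Prop :=
  (forall x, G x -> 0 < x) /\
  (forall x y, G x -> G y -> G (x * y)) /\
  (forall x n, G x -> 2 ^ n.-1 <= x < 2 ^ n ->
     forall y, 2 ^ n.-1 <= y < 2 ^ n -> G y).

(* The operation on U_2, expressed on the index pairs (i,k) of I_2(i,k)
   (well defined since (i,k) |-> I_2(i,k) is injective for k >= 1). *)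
Definition U2op (a b : nat * nat) : nat * nat :=
  if (a.1 == 0) && (a.2 == 1) then b
  else if (b.1 == 0) && (b.2 == 1) then a
  else (a.1 + b.1, a.2 + b.2).

(* Main.v *)
Require Import Defs.
From mathcomp Require Import all_boot.
From mathcomp Require Import zify.

Lemma pow_lt i k : 0 < k -> 2 ^ i < 2 ^ (i + k).
Proof. move=> hk; rewrite ltn_exp2l //; lia. Qed.

Lemma pow_le a b : a <= b -> 2 ^ a <= 2 ^ b.
Proof. by move=> h; rewrite leq_exp2l. Qed.

Lemma inj_I2 i k j l : 0 < k -> 0 < l -> I2 i k = I2 j l -> i = j /\ k = l.
Proof.
move=> hk hl E.
have F : forall x, I2 i k x <-> I2 j l x by move=> x; rewrite E.
have hij : i = j.
  have /F h1 : I2 i k (2 ^ i) by rewrite /I2 leqnn pow_lt.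
  have /F h2 : I2 j l (2 ^ j) by rewrite /I2 leqnn pow_lt.
  move: h1 h2; rewrite /I2 => /andP[a _] /andP[b _].
  move: a b; rewrite !leq_exp2l //; lia.
subst j; split => //.
have h1 : I2 i k (2 ^ (i + k) - 1).
  rewrite /I2; have := pow_lt i k hk; have := expn_gt0 2 (i + k); lia.
have h2 : I2 i l (2 ^ (i + l) - 1).
  rewrite /I2; have := pow_lt i l hl; have := expn_gt0 2 (i + l); lia.
move/F: h1; move/(proj2 (F _)): h2; rewrite /I2 => /andP[_ a] /andP[_ b].
have a' : 2 ^ (i + l) <= 2 ^ (i + k) by have := expn_gt0 2 (i + l); lia.
have b' : 2 ^ (i + k) <= 2 ^ (i + l) by have := expn_gt0 2 (i + k); lia.
move: a' b'; rewrite !leq_exp2l //; lia.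
Qed.

Lemma bitlen_G (G : nat -> Prop) (HG : is_2dc_semigroup G) i k j l t :
  0 < k -> 0 < l -> ~~ ((i == 0) && (k == 1)) -> ~~ ((j == 0) && (l == 1)) ->
  nsubset (I2 i k) G -> nsubset (I2 j l) G ->
  i + j <= t < i + j + k + l -> exists z, G z /\ 2 ^ t <= z < 2 ^ t.+1.
Proof.
case: HG => _ [Hmul _] hk hl ni nj Gi Gj /andP[t1 t2].
case: (ltnP t (i + j + k + l).-1) => ht.
- pose p := minn (t - j) (i + k - 1).
  pose q := t - p.
  have hp : I2 i k (2 ^ p).
    rewrite /I2 leq_exp2l // ltn_exp2l //; rewrite /p; lia.
  have hq : I2 j l (2 ^ q).
    rewrite /I2 leq_exp2l // ltn_exp2l //; rewrite /q /p; lia.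
  exists (2 ^ p * 2 ^ q); split; [exact: Hmul (Gi _ hp) (Gj _ hq)|].
  have -> : 2 ^ p * 2 ^ q = 2 ^ t by rewrite -expnD /q /p; congr (_ ^ _); lia.
  by rewrite leqnn /= ltn_exp2l.
- have ht' : t = (i + k).-1 + (j + l).-1 + 1 by lia.
  have e1 : 2 ^ (i + k) = 2 * 2 ^ (i + k).-1 by rewrite -expnS; congr (_ ^ _); lia.
  have e2 : 2 ^ (j + l) = 2 * 2 ^ (j + l).-1 by rewrite -expnS; congr (_ ^ _); lia.
  have A2 : 2 <= 2 ^ (i + k).-1.
    by rewrite -[X in X <= _]expn1 leq_exp2l //; move: ni; lia.
  have B2 : 2 <= 2 ^ (j + l).-1.
    by rewrite -[X in X <= _]expn1 leq_exp2l //; move: nj; lia.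
  have hx : I2 i k (2 ^ (i + k) - 1).
    rewrite /I2; have := pow_lt i k hk; lia.
  have hy : I2 j l (2 ^ (j + l) - 1).
    rewrite /I2; have := pow_lt j l hl; lia.
  exists ((2 ^ (i + k) - 1) * (2 ^ (j + l) - 1)).
  split; [exact: Hmul (Gi _ hx) (Gj _ hy)|].
  have T : 2 ^ t = 2 * (2 ^ (i + k).-1 * 2 ^ (j + l).-1)
    by rewrite ht' addn1 expnS expnD.
  rewrite expnS T e1 e2.
  move: A2 B2; set A := 2 ^ (i + k).-1; set B := 2 ^ (j + l).-1 => A2 B2.
  apply/andP; split; nia.
Qed.

Theorem lemma2p2 (G : nat -> Prop) (HG : is_2dc_semigroup G) :
  (* (1) U_2 with the operation is an abelian semigroup *)
  (forall i k j l, 0 < k -> 0 < l -> I2 i k = I2 j l -> i = j /\ k = l) /\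
  (forall a b : nat * nat, 0 < a.2 -> 0 < b.2 -> 0 < (U2op a b).2) /\
  (forall a b : nat * nat, 0 < a.2 -> 0 < b.2 -> U2op a b = U2op b a) /\
  (forall a b c : nat * nat, 0 < a.2 -> 0 < b.2 -> 0 < c.2 ->
     U2op a (U2op b c) = U2op (U2op a b) c) /\
  (* (2) *)
  (forall i k j l, 0 < k -> 0 < l ->
     nsubset (I2 i k) G -> nsubset (I2 j l) G ->
     nsubset (I2 (U2op (i, k) (j, l)).1 (U2op (i, k) (j, l)).2) G).
Proof.
split; first exact: inj_I2.
split.
  case=> a1 a2 [b1 b2] /= ha hb; rewrite /U2op /=.
  case: ifP => //; case: ifP => //= _ _; lia.
split.
  case=> [[|a1] [|[|a2]]] [[|b1] [|[|b2]]] //= _ _; rewrite /U2op /=;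
    congr (_, _); lia.
split.
  case=> [[|a1] [|[|a2]]] [[|b1] [|[|b2]]] [[|c1] [|[|c2]]] //= _ _ _;
    rewrite /U2op /= ?addn0 ?addnS ?addSn /=;
    congr (_, _); fold Nat.add; rewrite -?plusE; lia.
move=> i k j l hk hl Gi Gj.
rewrite /U2op /=.
case: ifP => [_ | ni] /=; first by [].
case: ifP => [_ | nj] /=; first by [].
move=> x /andP[x1 x2].
have x0 : 0 < x by have := expn_gt0 2 (i + j); lia.
have := trunc_log_bounds (isT : 1 < 2) x0; set t := trunc_log 2 x => /andP[b1 b2].
have t1 : i + j <= t.
  have : 2 ^ (i + j) < 2 ^ t.+1 by lia.
  rewrite ltn_exp2l //.
have t2 : t < i + j + (k + l).
  have : 2 ^ t < 2 ^ (i + j + (k + l)) by lia.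
  rewrite ltn_exp2l //.
have tt : i + j <= t < i + j + k + l.
  clearbody t; apply/andP; split; lia.
have [z [Gz hz]] := @bitlen_G G HG i k j l t hk hl (negbT ni) (negbT nj) Gi Gj tt.
case: HG => _ [_ Hdc].
clearbody t.
have H1 := Hdc z t.+1 Gz.
have e : t.+1.-1 = t := erefl.
rewrite e in H1.
have H2 : 2 ^ t <= z < 2 ^ t.+1 := hz.
have H3 : 2 ^ t <= x < 2 ^ t.+1 by rewrite b1 b2.
exact: (H1 H2 x H3).
Qed.
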